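(* Let $k$ be an integer, $m$ a positive integer and $p$ a prime, and let $g_k(m)=\sum_{d>0,\,d^2\mid m}\mu(d)\sigma_{k-1}(m/d^2)$, where $\mu$ is the Möbius function and $\sigma_{k-1}(m)=\sum_{d>0,\,d\mid m}d^{k-1}$. Then $g_k(mp)=(p^{k-1}+1)g_k(m)$ if $p\nmid m$, and $g_k(mp)=p^{k-1}g_k(m)$ if $p\mid m$. *)

(* Defs.v *)
From mathcomp Require Import all_boot all_order all_algebra.
Set Implicit Arguments. Unset Strict Implicit. Unset Printing Implicit Defensive.
Import Order.TTheory GRing.Theory Num.Theory.
Local Open Scope ring_scope.

(* Moebius function: mu(n) = (-1)^r if n > 0 is a product of r distinct primes,
   0 otherwise (0 is assigned to n = 0, which never occurs below). *)
Definition moebius (n : nat) : int :=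
  if (0 < n)%N && all (fun p => logn p n == 1%N) (primes n)
  then (-1) ^+ size (primes n) else 0.

Definition sigma (s : int) (m : nat) : rat :=
  \sum_(1 <= d < m.+1 | (d %| m)%N) (d%:Q) ^ s.

Definition g (k : int) (m : nat) : rat :=
  \sum_(1 <= d < m.+1 | (d ^ 2 %| m)%N) (moebius d)%:~R * sigma (k - 1) (m %/ d ^ 2).

(* Main.v *)
Require Import Defs.
From mathcomp Require Import all_boot all_order all_algebra zify ring.
Set Implicit Arguments. Unset Strict Implicit. Unset Printing Implicit Defensive.
Import Order.TTheory GRing.Theory Num.Theory.
Local Open Scope ring_scope.

Definition S (M : nat) (F : nat -> rat) := \sum_(1 <= d < M.+1 | (d %| M)%N) F d.

Lemma S_div M F : (0 < M)%N -> S M F = \sum_(d <- divisors M) F d.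
Proof.
move=> M0; rewrite /S -big_filter; apply: perm_big.
apply: uniq_perm; first by rewrite filter_uniq // iota_uniq.
  exact: divisors_uniq.
move=> d; rewrite mem_filter mem_iota -dvdn_divisors //.
case dM: (d %| M)%N => //=.
have := dvdn_leq M0 dM; have := dvdn_gt0 M0 dM; lia.
Qed.

Lemma logn_pe p b e : prime p -> ~~ (p %| e)%N -> (0 < e)%N -> logn p (p ^ b * e)%N = b.
Proof.
move=> pp pe e0.
by rewrite lognM ?expn_gt0 ?(prime_gt0 pp) // pfactorK // logn_coprime ?addn0 // prime_coprime.
Qed.

Lemma S_split p a n F : prime p -> ~~ (p %| n)%N -> (0 < n)%N ->
  S (p ^ a * n)%N F = \sum_(b < a.+1) S n (fun e => F (p ^ b * e)%N).
Proof.
move=> pp pn n0; have p0 := prime_gt0 pp.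
have M0 : (0 < p ^ a * n)%N by rewrite muln_gt0 expn_gt0 p0.
rewrite S_div // (eq_bigr (fun b : 'I_a.+1 => \sum_(e <- divisors n) F (p ^ b * e)%N)); last first.
  by move=> b _; rewrite S_div.
rewrite -(big_mkord xpredT (fun b => \sum_(e <- divisors n) F (p ^ b * e)%N)).
rewrite /index_iota subn0 -(@big_allpairs_dep _ _ _ _ _ _ (fun b e => p ^ b * e)%N).
have dpe e : e \in divisors n -> ~~ (p %| e)%N.
  rewrite -dvdn_divisors // => en; apply: contra pn => pe; exact: dvdn_trans pe en.
have dpe0 e : e \in divisors n -> (0 < e)%N.
  by rewrite -dvdn_divisors // => en; exact: dvdn_gt0 n0 en.
apply: perm_big; apply: uniq_perm; first exact: divisors_uniq.
  apply: allpairs_uniq; [exact: iota_uniq | exact: divisors_uniq |].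
  move=> [b e] [b' e'] H1 H2.
  have /allpairsP[[x y] /= [_ ey [-> ->]]] := H1.
  have /allpairsP[[x' y'] /= [_ ey' [-> ->]]] := H2.
  move=> /= E.
  have bb : x = x' by rewrite -(logn_pe x pp (dpe _ ey) (dpe0 _ ey)) E logn_pe // ?dpe ?dpe0.
  rewrite -bb in E *; congr (_, _); apply/eqP; have xp : (0 < p ^ x)%N by rewrite expn_gt0 p0.
  by rewrite -(eqn_pmul2l xp) E.

move=> d; rewrite -dvdn_divisors //; apply/idP/allpairsP => [dM | [[b e] /= [bi ei ->]]].
  have d0 := dvdn_gt0 M0 dM.
  exists (logn p d, (d`_p^')%N); split => /=.
  - change (logn p d \in iota 0 a.+1); rewrite mem_iota add0n ltnS -(logn_pe a pp pn n0); exact: dvdn_leq_log.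
  - rewrite -dvdn_divisors //.
    have cop : coprime (d`_p^')%N (p ^ a).
      by rewrite coprime_sym coprimeXl // prime_coprime // -p'natE // part_pnat.
    rewrite -(Gauss_dvdr _ cop); apply: dvdn_trans dM; rewrite -{2}(partnC p d0) p_part.
    exact: dvdn_mull.
  - by rewrite -p_part partnC.
move: bi; rewrite -[0%N :: _]/(iota 0 a.+1) mem_iota add0n ltnS => bi; rewrite -dvdn_divisors // in ei.
by rewrite dvdn_mul // dvdn_Pexp2l // prime_gt1.
Qed.
Lemma mu1 : moebius 1 = 1.
Proof. by []. Qed.

Lemma mu_pe p e : prime p -> ~~ (p %| e)%N -> (0 < e)%N ->
  moebius (p * e) = - moebius e.
Proof.
move=> pp pe e0; have p0 := prime_gt0 pp.
have pnot : p \notin primes e by rewrite mem_primes pp e0.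
have perm : perm_eq (primes (p * e)) (p :: primes e).
  apply: uniq_perm; [exact: primes_uniq | by rewrite /= pnot primes_uniq |].
  by move=> q; rewrite primesM // primes_prime // !inE.
rewrite /moebius muln_gt0 p0 e0 /= (perm_size perm) (perm_all _ perm) /=.
have lpe : logn p (p * e) = 1%N.
  by rewrite lognM // logn_prime // eqxx logn_coprime // prime_coprime.
rewrite lpe eqxx /=.
have -> : all (fun q => logn q (p * e) == 1%N) (primes e) =
          all (fun q => logn q e == 1%N) (primes e).
  apply: eq_in_all => q qe; rewrite lognM // logn_prime //.
  have qp : q != p by apply: contraNneq pnot => <-.
  by rewrite (negPf qp) add0n.
by case: all => //; rewrite exprS mulN1r.
Qed.

Lemma mu_p2e p b e : prime p -> (0 < e)%N -> moebius (p ^ b.+2 * e) = 0.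
Proof.
move=> pp e0; have p0 := prime_gt0 pp.
have M0 : (0 < p ^ b.+2 * e)%N by rewrite muln_gt0 expn_gt0 p0.
rewrite /moebius M0 /=.
case: allP => // /(_ p); rewrite mem_primes pp M0 dvdn_mulr ?dvdn_exp //.
rewrite lognM ?expn_gt0 ?p0 // pfactorK // => /(_ isT) /eqP; lia.
Qed.

Definition T (q : rat) (c : nat) := \sum_(b < c.+1) q ^+ b.

Lemma S1 F : S 1 F = F 1%N.
Proof. by rewrite S_div // [divisors 1]/= big_seq1. Qed.

Lemma sigmaS s M : sigma s M = S M (fun d => (d%:Q) ^ s).
Proof. by []. Qed.

Lemma sigma_split s p c n : prime p -> ~~ (p %| n)%N -> (0 < n)%N ->
  sigma s (p ^ c * n)%N = T ((p%:Q) ^ s) c * sigma s n.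
Proof.
move=> pp pn n0; rewrite !sigmaS S_split // /T big_distrl; apply: eq_bigr => b _.
rewrite /S big_distrr; apply: eq_bigr => d _.

by rewrite PoszM intrM expfzMl -pmulrn natrX exprnP exprzAC -exprnP pmulrn.
Qed.

Lemma sigma_pow s p c : prime p -> sigma s (p ^ c)%N = T ((p%:Q) ^ s) c.
Proof.
move=> pp; rewrite -[(p ^ c)%N]muln1 sigma_split // ?dvdn1 ?prime_gt0 //.
  by rewrite sigmaS S1 -[1%Z%:~R]/(1 : rat) exp1rz mulr1.
by apply/eqP => p1; rewrite p1 in pp.
Qed.

Lemma mu_mul p b e : prime p -> ~~ (p %| e)%N -> (0 < e)%N ->
  moebius (p ^ b * e)%N = moebius (p ^ b)%N * moebius e.
Proof.
move=> pp pe e0; case: b => [|[|b]].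
- by rewrite expn0 mul1n mu1 mul1r.
- rewrite expn1 mu_pe // -[p]muln1 mu_pe // ?dvdn1 ?mu1 ?mulN1r //.
  by apply/eqP => p1; rewrite p1 in pp.
- rewrite mu_p2e // -[(p ^ b.+2)%N]muln1 mu_p2e //. by case: (moebius e).
Qed.

Definition Fg k M d : rat :=
  if (d ^ 2 %| M)%N then (moebius d)%:~R * sigma (k - 1) (M %/ d ^ 2) else 0.

Lemma gS k M : (0 < M)%N -> g k M = S M (Fg k M).
Proof.
move=> M0; rewrite /g /S /Fg !(big_mkcond (fun d => _ %| M)%N) /=.
apply: eq_bigr => d _; case dM: (d ^ 2 %| M)%N; last by case: ifP.
by rewrite (dvdn_trans (dvdn_mulr d (dvdnn d)) dM).
Qed.

Definition h (p : nat) (q : rat) (a : nat) : rat :=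
  \sum_(b < a.+1) (if (b * 2 <= a)%N then (moebius (p ^ b))%:~R * T q (a - b * 2) else 0).

Lemma g_split k p a n : prime p -> ~~ (p %| n)%N -> (0 < n)%N ->
  g k (p ^ a * n)%N = h p ((p%:Q) ^ (k - 1)) a * g k n.
Proof.
move=> pp pn n0; have p0 := prime_gt0 pp.
have M0 : (0 < p ^ a * n)%N by rewrite muln_gt0 expn_gt0 p0.
rewrite gS // S_split // /h big_distrl; apply: eq_bigr => b _.
rewrite gS // /S big_distrr; apply: eq_bigr => e en.
have e0 : (0 < e)%N := dvdn_gt0 n0 en.
have pe : ~~ (p %| e)%N by apply: contra pn => pe; exact: dvdn_trans pe en.
have cpn : coprime p n by rewrite prime_coprime.
have cpe : coprime p e by rewrite prime_coprime.
rewrite /Fg expnMn -expnM.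
have cop : coprime (p ^ (b * 2)) (e ^ 2) by rewrite coprimeXl // coprimeXr.
rewrite Gauss_dvd // Gauss_dvdl ?coprimeXl // dvdn_Pexp2l ?prime_gt1 //.
rewrite Gauss_dvdr ?coprimeXl ?coprimeXr // 1?coprime_sym //.
rewrite /=; have [hb|hb] := boolP (b * 2 <= a)%N; last by rewrite /= mul0r.
case e2n: (e ^ 2 %| n)%N; last by rewrite mulr0.
have ne0 : (0 < n %/ e ^ 2)%N.
  by rewrite divn_gt0 ?expn_gt0 ?e0 // dvdn_leq.
have pne : ~~ (p %| n %/ e ^ 2)%N.
  apply: contra pn => pd; apply: dvdn_trans pd _; rewrite -{2}(divnK e2n); exact: dvdn_mulr.
have -> : (p ^ a * n %/ (p ^ (b * 2) * e ^ 2))%N = (p ^ (a - b * 2) * (n %/ e ^ 2))%N.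
  rewrite -{1}(subnK hb) expnD -{1}(divnK e2n) mulnACA mulnK //.
  by rewrite muln_gt0 !expn_gt0 p0 e0.
rewrite sigma_split // mu_mul // intrM.
by rewrite mulrACA.
Qed.

Lemma TS q c : T q c.+1 = 1 + q * T q c.
Proof.
rewrite /T big_ord_recl expr0 big_distrr /=; congr (_ + _).
by apply: eq_bigr => i _; rewrite exprS.
Qed.

Lemma mu_p p : prime p -> moebius p = -1.
Proof.
move=> pp; rewrite -[p]muln1 mu_pe // ?mu1 // ?dvdn1.
by apply/eqP => p1; rewrite p1 in pp.
Qed.

Lemma mu_p2 p i : prime p -> moebius (p ^ i.+2) = 0.
Proof. by move=> pp; rewrite -[(p ^ i.+2)%N]muln1 mu_p2e. Qed.

Lemma h0 p q : h p q 0 = 1.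
Proof. by rewrite /h big_ord_recl big_ord0 /= mu1 addr0 mul1r /T big_ord_recl big_ord0 addr0. Qed.

Lemma h1 p q : prime p -> h p q 1 = T q 1.
Proof. by move=> pp; rewrite /h big_ord_recl big_ord_recl big_ord0 /= mu1 !addr0 mul1r. Qed.

Lemma h2 p q c : prime p -> h p q c.+2 = T q c.+2 - T q c.
Proof.
move=> pp; rewrite /h big_ord_recl big_ord_recl big1 => [|i _].
  rewrite /= mu1 mul1r addr0 expn1 mu_p // subn0.
  by rewrite -[(c.+2 - 2)%N]/(c - 0)%N subn0 mulN1r.
by rewrite /= mu_p2 // mul0r; case: ifP.
Qed.

Lemma T0 q : T q 0 = 1.
Proof. by rewrite /T big_ord_recl big_ord0 addr0. Qed.

Theorem lemma4p1 (k : int) (m p : nat) (hm : (0 < m)%N) (hp : prime p) :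
  (~~ (p %| m)%N -> g k (m * p) = ((p%:Q) ^ (k - 1) + 1) * g k m) /\
  ((p %| m)%N -> g k (m * p) = (p%:Q) ^ (k - 1) * g k m).
Proof.
have [n cpn mE] := pfactor_coprime hp hm.
set a := logn p m in mE.
have pn : ~~ (p %| n)%N by rewrite -prime_coprime.
have n0 : (0 < n)%N by move: hm; rewrite mE muln_gt0 => /andP[].
have E1 : m = (p ^ a * n)%N by rewrite mE mulnC.
have E2 : (m * p)%N = (p ^ a.+1 * n)%N by rewrite mE -mulnA -expnSr mulnC.
rewrite E2 {2 4}E1 !g_split //.
set q := (p%:Q) ^ (k - 1).
split => [pm | pm].
  have a0 : a = 0%N.
    apply/eqP; rewrite -leqn0 leqNgt logn_gt0 mem_primes hp hm /= pm //.
  by rewrite a0 h1 // h0 TS T0; ring.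
have : (0 < a)%N by rewrite logn_gt0 mem_primes hp hm pm.
clearbody a; clear mE E1 E2; case: a => // [] [|d] _.
  by rewrite h2 // h1 // !TS T0; ring.
by rewrite !h2 // !TS; ring.
Qed.
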